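(* Let $H(s)=\boldsymbol b^T(s\boldsymbol I-\boldsymbol A)^{-1}\boldsymbol b$ be a minimal SSS system of order $n$ with $\boldsymbol A$ symmetric negative definite, and let $r<n$. Suppose $\boldsymbol s^*$ is a fixed point of the IRKA map $\lambda$, and let $H_r$ be the associated reduced model (which is SSS, obtained as $\boldsymbol A_r=\boldsymbol Q_r^T\boldsymbol A\boldsymbol Q_r$, $\boldsymbol b_r=\boldsymbol c_r=\boldsymbol Q_r^T\boldsymbol b$ with $\boldsymbol Q_r$ an orthonormal basis of the range of $\boldsymbol V_r$), with distinct poles $\tilde\lambda_1,\dots,\tilde\lambda_r$ (so $s_i^*=-\tilde\lambda_i$ and $H_r$ is a Hermite interpolant of $H$ at $-\tilde\lambda_1,\dots,-\tilde\lambda_r$). Then the diagonal matrix $\boldsymbol E=\mathrm{diag}\big(H''(-\tilde\lambda_1)-H_r''(-\tilde\lambda_1),\dots,H''(-\tilde\lambda_r)-H_r''(-\tilde\lambda_r)\big)$ is positive definite.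
   Context: SSS: $\boldsymbol A=\boldsymbol A^T$, $\boldsymbol c=\boldsymbol b$. IRKA map: for distinct $s_1,\dots,s_r$ not eigenvalues of $\boldsymbol A$, set $\boldsymbol V_r=[(s_1\boldsymbol I-\boldsymbol A)^{-1}\boldsymbol b,\dots,(s_r\boldsymbol I-\boldsymbol A)^{-1}\boldsymbol b]$, $\boldsymbol W_r=\boldsymbol V_r$ (SSS case), $\boldsymbol A_r=(\boldsymbol W_r^T\boldsymbol V_r)^{-1}\boldsymbol W_r^T\boldsymbol A\boldsymbol V_r$, and $\lambda(\boldsymbol s)=-(\text{eigenvalues of }\boldsymbol A_r)$; a fixed point satisfies $\lambda(\boldsymbol s)=\boldsymbol s$. By construction, the reduced model satisfies $H(s_i)=H_r(s_i)$ and $H'(s_i)=H_r'(s_i)$. *)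

(* Defs.v *)
(* Scalars: an arbitrary real closed field R (the paper works over the reals). *)
From HB Require Import structures.
From mathcomp Require Import all_boot all_order all_algebra.
Set Implicit Arguments. Unset Strict Implicit. Unset Printing Implicit Defensive.
Import Order.TTheory GRing.Theory Num.Theory.
Local Open Scope ring_scope.

Section Defs.
Variable R : rcfType.

Definition has_deriv (f : R -> R) (x l : R) : Prop :=
  forall e : R, 0 < e -> exists2 d : R, 0 < d &
    forall h : R, h != 0 -> `|h| < d -> `|(f (x + h) - f x) / h - l| < e.

Definition has_deriv2 (f : R -> R) (x l : R) : Prop :=
  exists (f' : R -> R) (d : R), 0 < d /\
    (forall y, `|y - x| < d -> has_deriv f y (f' y)) /\ has_deriv f' x l.

Definition tf (n : nat) (A : 'M[R]_n) (b : 'cV[R]_n) (s : R) : R :=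
  (b^T *m invmx (s%:M - A) *m b) 0 0.

Definition negdef (n : nat) (A : 'M[R]_n) : Prop :=
  forall x : 'cV[R]_n, x != 0 -> (x^T *m A *m x) 0 0 < 0.

Definition posdef (n : nat) (A : 'M[R]_n) : Prop :=
  forall x : 'cV[R]_n, x != 0 -> 0 < (x^T *m A *m x) 0 0.

(* minimality of (A, b, c = b): the Krylov matrix [b, Ab, ..., A^{n-1} b] has full rank n
   (controllability; observability is the same condition since c = b and A = A^T) *)
Definition krylov (n : nat) (A : 'M[R]_n) (b : 'cV[R]_n) : 'M[R]_n :=
  \matrix_(i < n) (b^T *m (A ^+ i)^T).
Definition minimal (n : nat) (A : 'M[R]_n) (b : 'cV[R]_n) : Prop :=
  \rank (krylov A b) = n.

(* IRKA: V_r = [(s_1 I - A)^{-1} b, ..., (s_r I - A)^{-1} b], W_r = V_r *)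
Definition irka_V (n r : nat) (A : 'M[R]_n) (b : 'cV[R]_n) (s : 'I_r -> R)
  : 'M[R]_(n, r) :=
  \matrix_(i < n, j < r) (invmx ((s j)%:M - A) *m b) i 0.

Definition irka_Ar (n r : nat) (A : 'M[R]_n) (b : 'cV[R]_n) (s : 'I_r -> R)
  : 'M[R]_r :=
  let V := irka_V A b s in invmx (V^T *m V) *m (V^T *m A *m V).

(* fixed point lambda(s) = s: the eigenvalues of A_r (with multiplicity) are
   exactly -s_1, ..., -s_r *)
Definition irka_fixed (n r : nat) (A : 'M[R]_n) (b : 'cV[R]_n) (s : 'I_r -> R)
  : Prop :=
  char_poly (irka_Ar A b s) = \prod_(i < r) ('X - (- s i)%:P).

End Defs.

(* Main.v *)
Require Import Defs.
From HB Require Import structures.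
From mathcomp Require Import all_boot all_order all_algebra.
From mathcomp Require Import ring lra zify.
Import Order.TTheory GRing.Theory Num.Theory.
Local Open Scope ring_scope.
Set Implicit Arguments. Unset Strict Implicit.

Section Calc.
Variable R : rcfType.

Definition lim0 (g : R -> R) (l : R) := forall e : R, 0 < e -> exists2 d : R, 0 < d &
  forall h : R, h != 0 -> `|h| < d -> `|g h - l| < e.

Lemma lim0_cst c : lim0 (fun _ => c) c.
Proof. move=> e he; exists 1 => // h _ _; by rewrite subrr normr0. Qed.

Lemma lim0_shift x : lim0 (fun h => x + h) x.
Proof. move=> e he; exists e => // h _ hh; by rewrite addrAC subrr add0r. Qed.

Lemma lim0_ext g k l : (exists2 d0, 0 < d0 & forall h, h != 0 -> `|h| < d0 -> g h = k h) ->
  lim0 g l -> lim0 k l.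
Proof.
move=> [d0 d0p E] L e he; have [d dp H] := L e he.
exists (Num.min d d0); first by rewrite lt_min dp d0p.
move=> h hn; rewrite lt_min => /andP[h1 h2]; rewrite -E //; exact: H.
Qed.

Lemma lim0D g k l m : lim0 g l -> lim0 k m -> lim0 (fun h => g h + k h) (l + m).
Proof.
move=> Lg Lk e he.
have he2 : 0 < e / 2 by rewrite divr_gt0.
have [d1 d1p H1] := Lg _ he2; have [d2 d2p H2] := Lk _ he2.
exists (Num.min d1 d2); first by rewrite lt_min d1p d2p.
move=> h hn; rewrite lt_min => /andP[h1 h2].
have := H1 h hn h1; have := H2 h hn h2.
have -> : g h + k h - (l + m) = (g h - l) + (k h - m) by ring.
move=> A B; apply: (le_lt_trans (ler_normD _ _)); lra.
Qed.

Lemma lim0N g l : lim0 g l -> lim0 (fun h => - g h) (- l).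
Proof.
move=> Lg e he; have [d dp H] := Lg e he; exists d => // h hn hd.
by rewrite -opprD normrN; apply: H.
Qed.

Lemma lim0M g k l m : lim0 g l -> lim0 k m -> lim0 (fun h => g h * k h) (l * m).
Proof.
move=> Lg Lk e he.
set C := `|l| + `|m| + 1.
have Cp : 0 < C by rewrite /C; have := normr_ge0 l; have := normr_ge0 m; lra.
set dl := Num.min 1 (e / C).
have dlp : 0 < dl by rewrite lt_min ltr01 divr_gt0.
have dl1 : dl <= 1 by rewrite ge_min lexx.
have dlC : dl * C <= e.
  have : dl <= e / C by rewrite ge_min lexx orbT.
  by rewrite ler_pdivlMr.
have [d1 d1p H1] := Lg _ dlp; have [d2 d2p H2] := Lk _ dlp.
exists (Num.min d1 d2); first by rewrite lt_min d1p d2p.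
move=> h hn; rewrite lt_min => /andP[h1 h2].
have A := H1 h hn h1; have B := H2 h hn h2.
have -> : g h * k h - l * m = (g h - l) * (k h - m) + (g h - l) * m + l * (k h - m) by ring.
set a := g h - l in A *; set b := k h - m in B *.
have E1 : `|a * b + a * m + l * b| <= `|a| * `|b| + `|a| * `|m| + `|l| * `|b|.
  rewrite -!normrM; apply: (le_trans (ler_normD _ _)).
  by rewrite lerD2r ler_normD.
apply: (le_lt_trans E1).
have := normr_ge0 a; have := normr_ge0 b; have := normr_ge0 l; have := normr_ge0 m.
rewrite /C in dlC *; nra.
Qed.

Lemma lim0_nz g l : lim0 g l -> l != 0 ->
  exists2 d, 0 < d & forall h, h != 0 -> `|h| < d -> `|l| / 2 < `|g h|.
Proof.
move=> Lg ln; have lp : 0 < `|l| / 2 by rewrite divr_gt0 ?normr_gt0.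
have [d dp H] := Lg _ lp; exists d => // h hn hd.
have := H h hn hd; have := lerB_dist l (g h).
rewrite distrC => A B. lra.
Qed.

Lemma lim0V g l : lim0 g l -> l != 0 -> lim0 (fun h => (g h)^-1) l^-1.
Proof.
move=> Lg ln e he.
have lp : 0 < `|l| by rewrite normr_gt0.
have [d0 d0p H0] := lim0_nz Lg ln.
have ep : 0 < e * `|l| ^+ 2 / 2 by rewrite divr_gt0 // mulr_gt0 // exprn_gt0.
have [d1 d1p H1] := Lg _ ep.
exists (Num.min d0 d1); first by rewrite lt_min d0p d1p.
move=> h hn; rewrite lt_min => /andP[h1 h2].
have A := H0 h hn h1; have B := H1 h hn h2.
have gp : 0 < `|g h| by apply: lt_trans A; rewrite divr_gt0.
have gn : g h != 0 by rewrite -normr_gt0.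
have -> : (g h)^-1 - l^-1 = (l - g h) / (g h * l) by field; apply/andP.
rewrite normrM normfV normrM ltr_pdivrMr ?mulr_gt0 //.
rewrite distrC in B.
have : e * `|l| ^+ 2 / 2 < e * (`|g h| * `|l|).
  have elp := mulr_gt0 he lp; rewrite expr2; nra.
lra.
Qed.

Lemma lim0_sum_seq (I : Type) (s : seq I) (F : I -> R -> R) (L : I -> R) :
  (forall i, lim0 (F i) (L i)) ->
  lim0 (fun h => \sum_(i <- s) F i h) (\sum_(i <- s) L i).
Proof.
move=> H; elim: s => [|i s IH].
  rewrite [X in lim0 _ X]big_nil.
  apply: lim0_ext (lim0_cst 0); exists 1 => // h _ _; by rewrite big_nil.
rewrite [X in lim0 _ X]big_cons; apply: lim0_ext (lim0D (H i) IH).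
by exists 1 => // h _ _; rewrite big_cons.
Qed.

Lemma lim0_exp g l k : lim0 g l -> lim0 (fun h => g h ^+ k) (l ^+ k).
Proof.
move=> Lg; elim: k => [|k IH].
  rewrite expr0; apply: lim0_ext (lim0_cst 1); exists 1 => // h _ _.
rewrite exprS; apply: lim0_ext (lim0M Lg IH); exists 1 => // h _ _; by rewrite exprS.
Qed.

Lemma lim0_horner (p : {poly R}) x : lim0 (fun h => p.[x + h]) p.[x].
Proof.
rewrite horner_coef; apply: lim0_ext; last first.
  apply: lim0_sum_seq => i; apply: lim0M (lim0_cst _) (lim0_exp _ (lim0_shift x)).
by exists 1 => // h _ _; rewrite horner_coef.
Qed.

Lemma deriv_lim0 f x g l :
  (exists2 d0, 0 < d0 & forall h, h != 0 -> `|h| < d0 -> (f (x + h) - f x) / h = g h) ->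
  lim0 g l -> has_deriv f x l.
Proof.
move=> [d0 d0p E] L; have := @lim0_ext g (fun h => (f (x + h) - f x) / h) l.
move=> H; apply: H L; by exists d0 => // h hn hd; rewrite E.
Qed.

End Calc.

Section Res.
Variable R : rcfType.
Variable m : nat.
Variable M : 'M[R]_m.

Definition res (s : R) := invmx (s%:M - M).

Lemma eval_cpmx s : map_mx (horner_eval s) (char_poly_mx M) = s%:M - M.
Proof.
apply/matrixP => i j; rewrite !mxE horner_evalE.
by rewrite hornerD hornerN hornerMn hornerX hornerC.
Qed.

Lemma cp_eval s : (char_poly M).[s] = \det (s%:M - M).
Proof. by rewrite -eval_cpmx det_map_mx /= horner_evalE. Qed.

Lemma unit_cp s : (s%:M - M \in unitmx) = ((char_poly M).[s] != 0).
Proof. by rewrite unitmxE unitfE cp_eval. Qed.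

Lemma res_entry s i j : s%:M - M \in unitmx ->
  res s i j = (\adj (char_poly_mx M) i j).[s] * ((char_poly M).[s])^-1.
Proof.
move=> U; rewrite /res /invmx U mxE cp_eval mulrC; congr (_ * _).
by rewrite -eval_cpmx -map_mx_adj mxE /= horner_evalE.
Qed.

Lemma unit_near s0 : s0%:M - M \in unitmx ->
  exists2 d, 0 < d & forall h, `|h| < d -> (s0 + h)%:M - M \in unitmx.
Proof.
move=> U; have := unit_cp s0; rewrite U => /esym Dn.
have [d dp H] := lim0_nz (lim0_horner (char_poly M) s0) Dn.
exists d => // h hd; have [->|hn] := eqVneq h 0; first by rewrite addr0.
rewrite unit_cp -normr_gt0; apply: lt_trans (H h hn hd).
by rewrite divr_gt0 ?normr_gt0.
Qed.

Definition mlim0 p q (F : R -> 'M[R]_(p, q)) (L : 'M[R]_(p, q)) :=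
  forall i j, lim0 (fun h => F h i j) (L i j).

Lemma mlim0_cst p q (C : 'M[R]_(p, q)) : mlim0 (fun _ => C) C.
Proof. move=> i j; exact: lim0_cst. Qed.

Lemma mlim0M p q k (F : R -> 'M[R]_(p, q)) (G : R -> 'M[R]_(q, k)) L1 L2 :
  mlim0 F L1 -> mlim0 G L2 -> mlim0 (fun h => F h *m G h) (L1 *m L2).
Proof.
move=> HF HG i j; rewrite mxE.
apply: lim0_ext; last first.
  apply: lim0_sum_seq => l; exact: lim0M (HF i l) (HG l j).
by exists 1 => // h _ _; rewrite mxE.
Qed.

Lemma mlim0D p q (F G : R -> 'M[R]_(p, q)) L1 L2 :
  mlim0 F L1 -> mlim0 G L2 -> mlim0 (fun h => F h + G h) (L1 + L2).
Proof.
move=> HF HG i j; rewrite mxE; apply: lim0_ext (lim0D (HF i j) (HG i j)).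
by exists 1 => // h _ _; rewrite mxE.
Qed.

Lemma mlim0_res s0 : s0%:M - M \in unitmx -> mlim0 (fun h => res (s0 + h)) (res s0).
Proof.
move=> U i j; have [d dp H] := unit_near U.
rewrite res_entry //; apply: lim0_ext; last first.
  apply: lim0M (lim0_horner _ _) (lim0V (lim0_horner _ _) _).
  by rewrite -unit_cp.
by exists d => // h _ hd; rewrite res_entry //; apply: H.
Qed.

Lemma res_diff s t : s%:M - M \in unitmx -> t%:M - M \in unitmx ->
  res t - res s = (s - t) *: (res t *m res s).
Proof.
move=> Us Ut.
have E : (s%:M - M) - (t%:M - M) = (s - t)%:M :> 'M_m.
  by rewrite opprB addrA subrK raddfB.
rewrite scalemxAr -mul_scalar_mx -E mulmxBl mulmxBr mulmxA.
rewrite -[res t *m _ *m res s]mulmxA /res (mulmxV Us) mulmx1.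
by rewrite mulmxA (mulVmx Ut) mul1mx.
Qed.


Lemma e00B (X Y : 'M[R]_1) : (X - Y) 0 0 = X 0 0 - Y 0 0.
Proof. by rewrite !mxE. Qed.
Lemma e00D (X Y : 'M[R]_1) : (X + Y) 0 0 = X 0 0 + Y 0 0.
Proof. by rewrite !mxE. Qed.
Lemma e00Z a (X : 'M[R]_1) : (a *: X) 0 0 = a * X 0 0.
Proof. by rewrite !mxE. Qed.

Lemma deriv_tf (c : 'cV[R]_m) s0 : s0%:M - M \in unitmx ->
  has_deriv (tf M c) s0 (- (c^T *m res s0 *m res s0 *m c) 0 0).
Proof.
move=> U; have [d dp H] := unit_near U.
apply: (@deriv_lim0 _ _ _ (fun h => - (c^T *m (res (s0 + h) *m res s0) *m c) 0 0)).
  exists d => // h hn hd; rewrite /tf -/(res (s0 + h)) -/(res s0) -e00B.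
  rewrite -mulmxBl -mulmxBr res_diff ?H // -scalemxAr -scalemxAl e00Z.
  by field.
apply: lim0N; rewrite -[c^T *m res s0 *m res s0]mulmxA.
exact: (mlim0M (mlim0M (mlim0_cst _) (mlim0M (mlim0_res U) (mlim0_cst _))) (mlim0_cst _) 0 0).
Qed.

Lemma deriv_F2 (c : 'cV[R]_m) s0 : s0%:M - M \in unitmx ->
  has_deriv (fun y => (c^T *m res y *m res y *m c) 0 0) s0
    (- (c^T *m (res s0 *m (res s0 *m res s0) + res s0 *m res s0 *m res s0) *m c) 0 0).
Proof.
move=> U; have [d dp H] := unit_near U.
apply: (@deriv_lim0 _ _ _ (fun h => - (c^T *m (res (s0 + h) *m (res (s0 + h) *m res s0)
    + res (s0 + h) *m res s0 *m res s0) *m c) 0 0)).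
  exists d => // h hn hd; rewrite -e00B.
  rewrite -[c^T *m res (s0 + h) *m res (s0 + h)]mulmxA -[c^T *m res s0 *m res s0]mulmxA.
  rewrite -mulmxBl -mulmxBr.
  have -> : res (s0 + h) *m res (s0 + h) - res s0 *m res s0 =
     res (s0 + h) *m (res (s0 + h) - res s0) + (res (s0 + h) - res s0) *m res s0.
    by rewrite mulmxBr mulmxBl addrA subrK.
  rewrite res_diff ?H // -scalemxAr -scalemxAl -scalerDr -scalemxAr -scalemxAl e00Z.
  rewrite !mulmxA; by field.
apply: lim0N.
have L1 := mlim0_res U.
apply: (mlim0M (mlim0M (mlim0_cst _) _) (mlim0_cst _) 0 0).
apply: mlim0D; first exact: (mlim0M L1 (mlim0M L1 (mlim0_cst _))).
exact: (mlim0M (mlim0M L1 (mlim0_cst _)) (mlim0_cst _)).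
Qed.

Lemma has_derivN (f : R -> R) (x l : R) : has_deriv f x l -> has_deriv (fun y => - f y) x (- l).
Proof.
move=> D; apply: (@deriv_lim0 _ _ _ (fun h => - ((f (x + h) - f x) / h))).
  by exists 1 => // h hn _; field.
exact: lim0N D.
Qed.

Lemma deriv2_tf (c : 'cV[R]_m) s0 : s0%:M - M \in unitmx ->
  has_deriv2 (tf M c) s0
    ((c^T *m (res s0 *m (res s0 *m res s0) + res s0 *m res s0 *m res s0) *m c) 0 0).
Proof.
move=> U; have [d dp H] := unit_near U.
exists (fun y => - (c^T *m res y *m res y *m c) 0 0), d; split => //; split.
  move=> y hy; apply: deriv_tf; have -> : y = s0 + (y - s0) by ring.
  exact: H.
rewrite -[X in has_deriv _ _ X]opprK; apply: has_derivN; exact: deriv_F2.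
Qed.

End Res.

Section Poly.
Variable R : rcfType.

Lemma horner_mx_sum n' (A : 'M[R]_n'.+1) (p : {poly R}) N : (size p <= N)%N ->
  horner_mx A p = \sum_(k < N) p`_k *: A ^+ k.
Proof.
move=> sp.
have E : p = \poly_(k < N) p`_k.
  apply/polyP => k; rewrite coef_poly; case: ltnP => // h.
  by rewrite nth_default // (leq_trans sp h).
rewrite {1}E poly_def linear_sum; apply: eq_bigr => k _.
by rewrite linearZ /= rmorphXn /= horner_mx_X.
Qed.

Lemma krylov_zero n' (A : 'M[R]_n'.+1) (b : 'cV[R]_n'.+1) (p : {poly R}) :
  minimal A b -> (size p <= n'.+1)%N -> horner_mx A p *m b = 0 -> p = 0.
Proof.
move=> Hm sp H.
have Hrow : (\row_(k < n'.+1) p`_k) *m krylov A b = 0.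
  rewrite mulmx_sum_row.
  have := congr1 trmx H; rewrite (horner_mx_sum _ sp) mulmx_suml linear0.
  rewrite linear_sum /= => Hs; rewrite -[RHS]Hs; apply: eq_bigr => k _.
  by rewrite /krylov rowK mxE -scalemxAl linearZ /= trmx_mul.
have RF : row_free (krylov A b) by rewrite /row_free Hm.
move/eqP: Hrow; rewrite mulmx_free_eq0 // => /eqP Hz.
apply/polyP => k; rewrite coef0.
case: (ltnP k n'.+1) => hk; last by rewrite nth_default // (leq_trans sp hk).
have := congr1 (fun X : 'rV[R]_n'.+1 => X 0 (Ordinal hk)) Hz; by rewrite !mxE.
Qed.


Lemma prod_size r (s : 'I_r -> R) (j : 'I_r) :
  (size (\prod_(k | k != j) ('X - (s k)%:P))%R <= r)%N.
Proof.
apply: leq_trans (size_poly_prod_leq _ _) _.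
under eq_bigr => k _ do rewrite size_XsubC.
rewrite sum_nat_const.
have -> : #|[pred k | k != j]| = r.-1 by rewrite cardC1 card_ord.
have := ltn_ord j; lia.
Qed.

Lemma indep n' r (A : 'M[R]_n'.+1) (b : 'cV[R]_n'.+1) (s : 'I_r -> R) (i : 'I_r)
    (c : 'rV[R]_r) :
  minimal A b -> (r < n'.+1)%N -> injective s ->
  (forall j, (s j)%:M - A \in unitmx) ->
  invmx ((s i)%:M - A) *m (invmx ((s i)%:M - A) *m b) =
    \sum_j c 0 j *: (invmx ((s j)%:M - A) *m b) -> False.
Proof.
move=> Hm Hr Hs U E.
pose g j := 'X - (s j)%:P.
have hg j (v : 'cV[R]_n'.+1) : horner_mx A (g j) *m (invmx ((s j)%:M - A) *m v) = - v.
  rewrite /g rmorphB /= horner_mx_X horner_mx_C -opprB mulNmx mulmxA mulmxV //.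
  by rewrite mul1mx.
pose pp := \prod_(j | j != i) g j.
pose qq j := g i * \prod_(k | k != j) g k.
pose T := horner_mx A (g i * \prod_k g k).
have T1 : T *m (invmx ((s i)%:M - A) *m (invmx ((s i)%:M - A) *m b)) = horner_mx A pp *m b.
  have -> : T = horner_mx A pp *m (horner_mx A (g i) *m horner_mx A (g i)).
    rewrite /T !mulmxE -!rmorphM /= (bigD1 i) //=; congr (horner_mx A _).
    rewrite /pp; ring.
  by rewrite -!mulmxA (hg i (invmx ((s i)%:M - A) *m b)) mulmxN (hg i b) opprK.
have T2 j : T *m (invmx ((s j)%:M - A) *m b) = - (horner_mx A (qq j) *m b).
  have -> : T = horner_mx A (qq j) *m horner_mx A (g j).
    rewrite /T mulmxE -rmorphM /= (bigD1 j) //=; congr (horner_mx A _).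
    rewrite /qq; ring.
  by rewrite -mulmxA hg mulmxN.
pose P0 := pp + \sum_j c 0 j *: qq j.
have HP : horner_mx A P0 *m b = 0.
  rewrite /P0 rmorphD /= linear_sum /= mulmxDl -T1 E mulmx_sumr mulmx_suml -big_split /=.
  apply: big1 => j _; by rewrite -scalemxAr T2 linearZ /= -scalemxAl scalerN addNr.
have sP : (size P0 <= n'.+1)%N.
  apply: leq_trans (size_polyD _ _) _; rewrite geq_max; apply/andP; split.
    by apply: leq_trans (prod_size s i) _; apply: ltnW.
  apply: (big_ind (fun p : {poly R} => size p <= n'.+1)%N) => //.
    by rewrite size_poly0.
    by move=> p q hp hq; apply: leq_trans (size_polyD _ _) _; rewrite geq_max hp hq.
  move=> j _; apply: leq_trans (size_scale_leq _ _) _.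
  apply: leq_trans (size_polyMleq _ _) _; rewrite /g size_XsubC /=.
  by apply: leq_trans (prod_size s j) _.
have P0z := krylov_zero Hm sP HP.
have : P0.[s i] != 0.
  rewrite /P0 hornerD horner_sum big1 ?addr0 => [|j _]; last first.
    by rewrite hornerZ /qq hornerM /g hornerXsubC subrr mul0r mulr0.
  rewrite /pp horner_prod; apply/prodf_neq0 => j ji.
  by rewrite hornerXsubC subr_eq0 eq_sym (inj_eq Hs).
by rewrite P0z horner0 eqxx.
Qed.

End Poly.

Section Main.
Variable R : rcfType.

Lemma posdef_unit k (K : 'M[R]_k) :
  (forall x : 'cV_k, x != 0 -> 0 < (x^T *m K *m x) 0 0) -> K \in unitmx.
Proof.
move=> P; rewrite unitmxE unitfE; apply/negP => /det0P [v vn vK].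
have vT : v^T != 0 by apply: contra vn => /eqP H; rewrite -[v]trmxK H linear0.
by have := P _ vT; rewrite trmxK vK mul0mx mxE ltxx.
Qed.

Lemma key n r (A : 'M[R]_n) (b : 'cV[R]_n) (Q : 'M[R]_(n, r)) (s : R) :
  A^T = A -> Q^T *m Q = 1%:M ->
  (forall x : 'cV_n, x != 0 -> 0 < (x^T *m (s%:M - A) *m x) 0 0) ->
  invmx (s%:M - A) *m b = Q *m (Q^T *m (invmx (s%:M - A) *m b)) ->
  (forall z, invmx (s%:M - A) *m (invmx (s%:M - A) *m b) != Q *m z) ->
  0 < (b^T *m (invmx (s%:M - A) *m (invmx (s%:M - A) *m invmx (s%:M - A))
        + invmx (s%:M - A) *m invmx (s%:M - A) *m invmx (s%:M - A)) *m b) 0 0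
      - ((Q^T *m b)^T *m (invmx (s%:M - Q^T *m A *m Q) *m (invmx (s%:M - Q^T *m A *m Q)
         *m invmx (s%:M - Q^T *m A *m Q)) + invmx (s%:M - Q^T *m A *m Q) *m
         invmx (s%:M - Q^T *m A *m Q) *m invmx (s%:M - Q^T *m A *m Q)) *m (Q^T *m b)) 0 0.
Proof.
move=> AT QQ PD xQ x1Q.
set Rm := invmx (s%:M - A) in xQ x1Q *.
set Kr := s%:M - Q^T *m A *m Q.
set Rr := invmx Kr.
set K := s%:M - A.
have U : K \in unitmx by apply: posdef_unit.
have KT : K^T = K by rewrite /K raddfB /= tr_scalar_mx AT.
have RT : Rm^T = Rm by rewrite /Rm trmx_inv -/K KT.
have KrE : Kr = Q^T *m K *m Q.
  by rewrite /Kr /K mulmxBr mulmxBl mul_mx_scalar -scalemxAl QQ scalemx1.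
have Qinj : forall z : 'cV_r, Q *m z = 0 -> z = 0.
  by move=> z Hz; rewrite -(mul1mx z) -QQ -mulmxA Hz mulmx0.
have PDr : forall z : 'cV_r, z != 0 -> 0 < (z^T *m Kr *m z) 0 0.
  move=> z zn; rewrite KrE.
  have -> : z^T *m (Q^T *m K *m Q) *m z = (Q *m z)^T *m K *m (Q *m z).
    by rewrite trmx_mul !mulmxA.
  apply: PD; apply/eqP => /Qinj; exact/eqP.
have Ur : Kr \in unitmx by apply: posdef_unit.
have KrT : Kr^T = Kr by rewrite KrE !trmx_mul trmxK KT mulmxA.
have RrT : Rr^T = Rr by rewrite /Rr trmx_inv KrT.
set x := Rm *m b in xQ x1Q.
set y := Q^T *m x in xQ.
set x1 := Rm *m x in x1Q.
have Kx1 : K *m x1 = x by rewrite /x1 mulmxA mulmxV // mul1mx.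
have Ry : Rr *m (Q^T *m b) = y.
  have : Kr *m y = Q^T *m b.
    by rewrite KrE -!mulmxA -xQ /x [K *m _]mulmxA mulmxV // mul1mx.
  by move<-; rewrite mulmxA mulVmx // mul1mx.
set z := Rr *m y.
set w := Q *m z.
have KrZ : Kr *m z = y by rewrite /z mulmxA mulmxV // mul1mx.
set dd := x1 - w.
have Qdd : Q^T *m K *m dd = 0.
  have E1 : Q^T *m K *m x1 = y by rewrite -mulmxA Kx1.
  have E2 : Q^T *m K *m w = y by rewrite /w mulmxA -KrE KrZ.
  by rewrite /dd mulmxBr E1 E2 subrr.
have wKd : w^T *m K *m dd = 0.
  have -> : w^T *m K *m dd = z^T *m (Q^T *m K *m dd) by rewrite /w trmx_mul !mulmxA.
  by rewrite Qdd mulmx0.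
have dKw : dd^T *m K *m w = 0.
  have -> : dd^T *m K *m w = (w^T *m K *m dd)^T.
    by rewrite [(w^T *m K *m dd)^T]trmx_mul [(w^T *m K)^T]trmx_mul trmxK KT mulmxA.
  by rewrite wKd linear0.
have Pexp : x1^T *m K *m x1 = w^T *m K *m w + dd^T *m K *m dd.
  have -> : x1 = w + dd by rewrite /dd addrC subrK.
  rewrite [(w + dd)^T]linearD /= mulmxDl mulmxDl.
  rewrite [w^T *m K *m (w + dd)]mulmxDr [dd^T *m K *m (w + dd)]mulmxDr wKd dKw.
  by rewrite addr0 add0r.
have x1T : x1^T = b^T *m Rm *m Rm by rewrite /x1 /x !trmx_mul RT.
have P1 : b^T *m (Rm *m (Rm *m Rm)) *m b = x1^T *m K *m x1.
  by rewrite x1T -[b^T *m Rm *m Rm *m K *m x1]mulmxA Kx1 /x !mulmxA.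
have P2 : b^T *m (Rm *m Rm *m Rm) *m b = x1^T *m K *m x1.
  by rewrite -P1 !mulmxA.
have Wz : w^T *m K *m w = z^T *m Kr *m z by rewrite /w trmx_mul KrE !mulmxA.
have zT : z^T = (Q^T *m b)^T *m Rr *m Rr by rewrite /z -Ry !trmx_mul RrT ?mulmxA.
have W1 : (Q^T *m b)^T *m (Rr *m (Rr *m Rr)) *m (Q^T *m b) = w^T *m K *m w.
  by rewrite Wz zT -[(Q^T *m b)^T *m Rr *m Rr *m Kr *m z]mulmxA KrZ -Ry !mulmxA.
have W2 : (Q^T *m b)^T *m (Rr *m Rr *m Rr) *m (Q^T *m b) = w^T *m K *m w.
  by rewrite -W1 !mulmxA.
have ddn : dd != 0.
  apply/eqP => H; move: (x1Q z); rewrite -/x -/x1.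
  have -> : x1 = w by rewrite -(subrK w x1) -/dd H add0r.
  by rewrite eqxx.
have := PD _ ddn; rewrite -/K => Dp.
rewrite !mulmxDr !mulmxDl P1 P2 W1 W2 !e00D Pexp e00D; lra.
Qed.

End Main.

Section Final.
Variable R : rcfType.

Lemma nz_entry k (x : 'cV[R]_k) : x != 0 -> exists j, x j 0 != 0.
Proof.
move=> xn; apply/existsP; apply: contraR xn; rewrite negb_exists => /forallP H.
apply/eqP/matrixP => j l; rewrite (ord1 l) mxE; exact/eqP/negbNE/H.
Qed.

Lemma wsum_gt0 k (d u : 'I_k -> R) : (forall j, 0 < d j) -> (exists j, u j != 0) ->
  0 < \sum_j d j * u j ^+ 2.
Proof.
move=> dp [j0 uj]; rewrite (bigD1 j0) //=.
have h1 : 0 < d j0 * u j0 ^+ 2 by rewrite mulr_gt0 // exprn_even_gt0 ?uj ?orbT.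
have h2 : 0 <= \sum_(j | j != j0) d j * u j ^+ 2.
  by apply: sumr_ge0 => j _; apply: mulr_ge0; [apply: ltW | apply: sqr_ge0].
lra.
Qed.


Lemma diag_quad k (x : 'cV[R]_k) (d : 'rV[R]_k) :
  (x^T *m diag_mx d *m x) 0 0 = \sum_j d 0 j * x j 0 ^+ 2.
Proof. rewrite mul_mx_diag !mxE; apply: eq_bigr => j _; rewrite !mxE; ring. Qed.

Lemma xx_gt0 k (x : 'cV[R]_k) : x != 0 -> 0 < (x^T *m x) 0 0.
Proof.
move=> xn; have -> : (x^T *m x) 0 0 = \sum_j 1 * x j 0 ^+ 2.
  by rewrite !mxE; apply: eq_bigr => j _; rewrite !mxE; ring.
apply: wsum_gt0 => //; exact: nz_entry.
Qed.

Lemma red_posdef n r (A : 'M[R]_n) (Q : 'M[R]_(n, r)) (s : R) :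
  Q^T *m Q = 1%:M ->
  (forall x : 'cV_n, x != 0 -> 0 < (x^T *m (s%:M - A) *m x) 0 0) ->
  (forall z : 'cV_r, z != 0 -> 0 < (z^T *m (s%:M - Q^T *m A *m Q) *m z) 0 0).
Proof.
move=> QQ PD z zn.
have KrE : s%:M - Q^T *m A *m Q = Q^T *m (s%:M - A) *m Q.
  by rewrite mulmxBr mulmxBl mul_mx_scalar -scalemxAl QQ scalemx1.
have Qinj : forall z : 'cV_r, Q *m z = 0 -> z = 0.
  by move=> z' Hz; rewrite -(mul1mx z') -QQ -mulmxA Hz mulmx0.
rewrite KrE.
have -> : z^T *m (Q^T *m (s%:M - A) *m Q) *m z = (Q *m z)^T *m (s%:M - A) *m (Q *m z).
  by rewrite trmx_mul !mulmxA.
apply: PD; apply/eqP => /Qinj; exact/eqP.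
Qed.

End Final.

Unset Implicit Arguments.
Theorem lemma4 (R : rcfType) (n r : nat) (A : 'M[R]_n) (b : 'cV[R]_n)
    (s : 'I_r -> R) (Q : 'M[R]_(n, r)) :
  A^T = A -> negdef A -> minimal A b -> (r < n)%N ->
  injective s -> (forall i, (s i)%:M - A \in unitmx) ->
  irka_fixed A b s ->
  Q^T *m Q = 1%:M -> (Q^T == (irka_V A b s)^T)%MS ->
  exists d2H d2Hr : 'I_r -> R,
    (forall i, has_deriv2 (tf A b) (s i) (d2H i) /\
               has_deriv2 (tf (Q^T *m A *m Q) (Q^T *m b)) (s i) (d2Hr i)) /\
    posdef (diag_mx (\row_i (d2H i - d2Hr i))).
Proof.
move=> AT ND Hmin Hr Hs U Hfix QQ QV.
case: n A b Q AT ND Hmin Hr U Hfix QQ QV => [|n'] A b Q AT ND Hmin Hr U Hfix QQ QV.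
  by [].
set V := irka_V A b s.
have colV j : invmx ((s j)%:M - A) *m b = col j V.
  by apply/matrixP => k l; rewrite (ord1 l) !mxE.
move/andP: QV => [QsV VsQ].
have inQ (v : 'cV[R]_n'.+1) : (v^T <= Q^T)%MS -> v = Q *m (Q^T *m v).
  move/submxP => [D HD].
  have -> : v = Q *m D^T by rewrite -[v]trmxK HD trmx_mul trmxK.
  by rewrite [Q^T *m (Q *m _)]mulmxA QQ mul1mx.
have colQ j : invmx ((s j)%:M - A) *m b = Q *m (Q^T *m (invmx ((s j)%:M - A) *m b)).
  apply: inQ; rewrite colV tr_col; apply: submx_trans VsQ; exact: row_sub.
have notQ i (z : 'cV[R]_r) : invmx ((s i)%:M - A) *m (invmx ((s i)%:M - A) *m b) != Q *m z.
  apply/eqP => H.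
  have : ((invmx ((s i)%:M - A) *m (invmx ((s i)%:M - A) *m b))^T <= V^T)%MS.
    by rewrite H trmx_mul; apply: submx_trans QsV; exact: submxMl.
  move/submxP => [c Hc]; apply: (indep (i := i) (c := c) Hmin Hr Hs U).
  rewrite -[LHS]trmxK Hc mulmx_sum_row linear_sum /=; apply: eq_bigr => j _.
  by rewrite linearZ /= -tr_col trmxK colV.
have [M0 HM0] : exists M0 : 'M[R]_r, V^T = M0 *m Q^T by apply/submxP.
have rQ : \rank Q^T = r.
  apply/eqP; rewrite eqn_leq rank_leq_row /=.
  by rewrite -{1}(mxrank1 R r) -QQ mxrankM_maxl.
have rV : \rank V^T = r.
  by apply/eqP; rewrite eqn_leq rank_leq_row /= -{1}rQ mxrankS.
have M0u : M0 \in unitmx.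
  rewrite -row_free_unit /row_free eqn_leq rank_leq_row /=.
  by rewrite -{1}rV HM0 mxrankM_maxl.
set N := M0^T.
have Nu : N \in unitmx by rewrite unitmx_tr.
have HV : V = Q *m N by rewrite -[V]trmxK HM0 trmx_mul trmxK.
set B := Q^T *m A *m Q.
have VV : V^T *m V = M0 *m N by rewrite HM0 HV mulmxA -[M0 *m Q^T *m Q]mulmxA QQ mulmx1.
have VAV : V^T *m A *m V = M0 *m B *m N.
  by rewrite HM0 HV /B !mulmxA.
have ArE : irka_Ar A b s = invmx (M0 *m N) *m (M0 *m B *m N).
  by rewrite /irka_Ar -/V VV VAV.
have spos i : 0 < s i.
  have rt : root (char_poly (irka_Ar A b s)) (- s i).
    rewrite Hfix rootE horner_prod; apply/eqP; rewrite (bigD1 i) //=.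
    by rewrite hornerXsubC subrr mul0r.
  have [v Hv vn] : exists2 v : 'rV_r, v *m irka_Ar A b s = (- s i) *: v & v != 0.
    by apply/eigenvalueP; rewrite eigenvalue_root_char.
  have Gu : M0 *m N \in unitmx by rewrite unitmx_mul M0u Nu.
  set u' := v *m invmx (M0 *m N).
  have vE : v = u' *m (M0 *m N) by rewrite /u' mulmxKV.
  set u := u' *m M0.
  have uB : u *m B = (- s i) *: u.
    have : u *m B *m N = (- s i) *: u *m N.
      rewrite /u -[u' *m M0 *m B]mulmxA -[u' *m (M0 *m B) *m N]mulmxA.
      have := Hv; rewrite ArE (mulmxA v) -/u' => ->.
      by rewrite -scalemxAl -mulmxA -vE.
    by move/(congr1 (fun X => X *m invmx N)); rewrite !mulmxK.
  have un : u != 0.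
    apply: contra vn => /eqP u0; rewrite vE mulmxA -/u u0 mul0mx.
    done.
  set w := Q *m u^T.
  have wn : w != 0.
    apply: contra un => /eqP w0.
    have : Q^T *m w = u^T by rewrite /w mulmxA QQ mul1mx.
    by rewrite w0 mulmx0 => /(congr1 trmx); rewrite trmxK linear0 => <-.
  have Ew : w^T *m A *m w = (- s i) *: (u *m u^T).
    by rewrite /w trmx_mul trmxK scalemxAl -uB /B !mulmxA.
  have := ND w wn; rewrite Ew e00Z.
  have uT : u^T != 0 by apply: contra un => /eqP H; rewrite -[u]trmxK H linear0.
  have := xx_gt0 uT; rewrite trmxK; nra.
have PD i : forall x : 'cV[R]_n'.+1, x != 0 -> 0 < (x^T *m ((s i)%:M - A) *m x) 0 0.
  move=> x xn; rewrite mulmxBr mulmxBl mul_mx_scalar -scalemxAl e00B e00Z.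
  have := ND x xn; have := xx_gt0 xn; have := spos i; nra.
have Ur i : (s i)%:M - Q^T *m A *m Q \in unitmx.
  apply: posdef_unit; exact: (red_posdef QQ (PD i)).
exists (fun i => (b^T *m (res A (s i) *m (res A (s i) *m res A (s i))
   + res A (s i) *m res A (s i) *m res A (s i)) *m b) 0 0).
exists (fun i => ((Q^T *m b)^T *m (res B (s i) *m (res B (s i) *m res B (s i))
   + res B (s i) *m res B (s i) *m res B (s i)) *m (Q^T *m b)) 0 0).
split.
  by move=> i; split; apply: deriv2_tf.
move=> x xn; rewrite diag_quad; apply: wsum_gt0; last exact: nz_entry.
move=> j; rewrite mxE; exact: (key AT QQ (PD j) (colQ j) (notQ j)).
Qed.
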